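(* Fix real constants $u,v$ with $0<u<v<1$, and let $n\ge 1$ be an integer. Let $\beta>1$ be real and let $f(x)\in\mathbb Z[x]$ be a monic polynomial of degree $2n+2$ such that $f(\beta)=0$, $f(0)=1$, $$ \beta> \max\left\{ \frac 2u, \frac 1{1-v} \right\}, $$ and $$ \frac{f(x)}{(x-\beta)(x-1/\beta)} = x^{2n}+1+\sum_{i=1}^{2n-1}g_i x^i $$ for real numbers $g_i$ satisfying $u<g_i<v$ for $i=1,\dots,2n-1$. Then $f(x)$ is self-reciprocal (i.e. $x^{2n+2}f(1/x)=f(x)$) and $d_{\beta}(1)$ is $(1,2n+1)$-periodic.
   Context: For a real $\beta>1$, the beta transformation is $T_\beta(x)=\beta x-\lfloor \beta x\rfloor$ on $[0,1)$; for $x\in[0,1)$ put $x_n=\lfloor \beta T_\beta^{n-1}(x)\rfloor$ and $d_\beta(x)=x_1x_2x_3\cdots$. The expansion of one is $d_\beta(1):=\lim_{\epsilon\downarrow 0} d_\beta(1-\epsilon)$ (limit in the product topology). An infinite word $x_1x_2\cdots$ is eventually periodic if it can be written $x_1\cdots x_m(x_{m+1}\cdots x_{m+p})^\infty$ with $m\ge 0$, $p\ge 1$; choosing $m$ and $p$ minimal, the word is called $(m,p)$-periodic. *)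

(* Defs.v *)
From HB Require Import structures.
From mathcomp Require Import all_boot all_order all_algebra.
From mathcomp Require Import reals.
Set Implicit Arguments. Unset Strict Implicit. Unset Printing Implicit Defensive.
Import Order.TTheory GRing.Theory Num.Theory.
Local Open Scope ring_scope.

Definition Tbeta (R : realType) (beta x : R) : R :=
  beta * x - (Num.floor (beta * x))%:~R.

(* Digit sequence d_beta(x) = x_1 x_2 ..., indexed from 0:
   dbeta beta x k = x_{k+1} = floor (beta * T_beta^k x). *)
Definition dbeta (R : realType) (beta x : R) (k : nat) : int :=
  Num.floor (beta * iter k (Tbeta beta) x).

(* w is d_beta(1) := lim_{eps -> 0+} d_beta(1 - eps) in the product topology
   (on the discrete digit alphabet): every finite prefix of d_beta(1-eps)
   eventually (for small eps > 0) agrees with that of w. *)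
Definition is_dbeta_one (R : realType) (beta : R) (w : nat -> int) : Prop :=
  forall K : nat, exists2 e0 : R, 0 < e0 &
    forall eps : R, 0 < eps -> eps < e0 ->
      forall k : nat, (k <= K)%N -> dbeta beta (1 - eps) k = w k.

(* w = w_1 ... w_m (w_{m+1} ... w_{m+p})^oo  (0-indexed shift). *)
Definition eventually_periodic_with (w : nat -> int) (m p : nat) : Prop :=
  (1 <= p)%N /\ forall k : nat, (m <= k)%N -> w (k + p)%N = w k.

Definition mp_periodic (w : nat -> int) (m p : nat) : Prop :=
  eventually_periodic_with w m p /\
  forall m' p' : nat, eventually_periodic_with w m' p' ->
    (m <= m')%N /\ (p <= p')%N.

(* Main.v *)
Require Import Defs.
From HB Require Import structures.
From mathcomp Require Import all_boot all_order all_algebra.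
From mathcomp Require Import reals.
From mathcomp Require Import ring lra zify.
Import Order.TTheory GRing.Theory Num.Theory.
Local Open Scope ring_scope.

Lemma floor_shift (R : realType) (a : R) (z : int) :
  0 <= a -> a < 1 -> Num.floor (a + z%:~R) = z.
Proof.
move=> h0 h1; apply: floor_def; rewrite intrD; apply/andP; split; lra.
Qed.

Lemma Tbeta_itv (R : realType) (b x : R) : 0 <= Tbeta b x /\ Tbeta b x < 1.
Proof.
rewrite /Tbeta; have /andP[h1 h2] := floor_itv (b * x).
rewrite intrD in h2; split; lra.
Qed.

Lemma Tbeta_eq (R : realType) (b x : R) :
  b * x = Tbeta b x + (Num.floor (b * x))%:~R.
Proof. rewrite /Tbeta; lra. Qed.

Lemma bern (R : realType) (b : R) (j : nat) : 1 <= b ->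
  1 + j%:R * (b - 1) <= b ^+ j.
Proof.
move=> hb; elim: j => [|j IH]; first by rewrite expr0; lra.
rewrite exprS -natr1.
have h0 : 0 <= j%:R :> R by apply: ler0n.
have : 0 <= (b - 1) * (j%:R * (b - 1)) by apply: mulr_ge0; nra.
nra.
Qed.

Lemma pow_unbounded (R : realType) (b z : R) : 1 < b ->
  (forall j : nat, `|b ^+ j * z| < 1) -> z = 0.
Proof.
move=> hb hj; apply/eqP; apply/negPn/negP => hz.
have az : 0 < `|z| by rewrite normr_gt0.
set t := (`|z| * (b - 1))^-1.
have t0 : 0 <= t by rewrite /t invr_ge0; apply: mulr_ge0; lra.
have := archi_boundP t0; set j := Num.Def.archi_bound t => hjt.
have := hj j; rewrite normrM (ger0_norm (exprn_ge0 _ _)); last lra.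
have := @bern R b j (ltW hb).
have hzb : 0 < `|z| * (b - 1) by apply: mulr_gt0; lra.
have : t * (`|z| * (b - 1)) = 1 by rewrite /t mulVf // gt_eqF.
nra.
Qed.

Lemma yper (R : realType) (b : R) (N : nat) :
  iter N.+1 (Tbeta b) 1 = iter 1 (Tbeta b) 1 ->
  forall k q, (1 <= k)%N -> iter (k + q * N) (Tbeta b) 1 = iter k (Tbeta b) 1.
Proof.
move=> hN k q hk; elim: q => [|q IH]; first by rewrite mul0n addn0.
have -> : (k + q.+1 * N = (k + q * N).-1 + N.+1)%N.
  by rewrite mulSn; move: hk; lia.
rewrite iterD hN -iterD; have -> : ((k + q * N).-1 + 1 = k + q * N)%N.
  by move: hk; lia.
exact: IH.
Qed.

Lemma yrec (R : realType) (b : R) k :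
  iter k.+1 (Tbeta b) 1 = b * iter k (Tbeta b) 1 - (dbeta b 1 k)%:~R.
Proof. by rewrite iterS /Tbeta /dbeta. Qed.

Lemma yred (R : realType) (b : R) (N : nat) : (0 < N)%N ->
  iter N.+1 (Tbeta b) 1 = iter 1 (Tbeta b) 1 ->
  forall j, (1 <= j)%N -> exists2 i, (1 <= i <= N)%N & iter j (Tbeta b) 1 = iter i (Tbeta b) 1.
Proof.
move=> N0 hN j hj; exists ((j.-1 %% N).+1).
  by rewrite /= ltn_mod.
rewrite -(@yper R b N hN ((j.-1 %% N).+1) (j.-1 %/ N)) //; congr (iter _ _ _).
by move: (divn_eq j.-1 N) hj; lia.
Qed.

Lemma dyn_mp (R : realType) (b : R) (N : nat) : 1 < b -> (1 < N)%N ->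
  iter N.+1 (Tbeta b) 1 = iter 1 (Tbeta b) 1 ->
  (forall j, (1 <= j < N)%N -> iter j (Tbeta b) 1 != iter N (Tbeta b) 1) ->
  dbeta b 1 N != dbeta b 1 0 ->
  mp_periodic (dbeta b 1) 1 N.
Proof.
move=> hb hN hper hdist hw.
set y := fun k => iter k (Tbeta b) 1.
set w := dbeta b 1.
have yP : forall k q, (1 <= k)%N -> y (k + q * N)%N = y k.
  by move=> k q hk; apply: yper.
have wP : forall k q, (1 <= k)%N -> w (k + q * N)%N = w k.
  by move=> k q hk; rewrite /w /dbeta; have := yP k q hk; rewrite /y => ->.
have yR : forall k, y k.+1 = b * y k - (w k)%:~R by move=> k; apply: yrec.
have yI : forall k, 0 <= y k.+1 /\ y k.+1 < 1.
  by move=> k; rewrite /y iterS; apply: Tbeta_itv.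
split.
  split; first lia.
  by move=> k hk; have := wP k 1%N hk; rewrite mul1n.
move=> m p [hp hmp].
have [M hM1 hMm] : exists2 M, (1 <= M)%N & (m <= M)%N by exists m.+1.
have hz : y M = y (M + p)%N.
  suff : y M - y (M + p)%N = 0 by lra.
  apply: (@pow_unbounded R b) => // j.
  have -> : b ^+ j * (y M - y (M + p)%N) = y (M + j)%N - y (M + j + p)%N.
    elim: j => [|j IH]; first by rewrite expr0 mul1r addn0.
    rewrite exprS -mulrA IH addnS addSn !yR hmp; last by lia.
    lra.
  have := yI (M + j).-1; have := yI (M + j + p).-1.
  rewrite !prednK; try lia. move=> [h1 h2] [h3 h4].
  rewrite ltr_norml; apply/andP; split; lra.
have hz2 : forall j, y (M + j)%N = y (M + j + p)%N.
  elim=> [|j IH]; first by rewrite addn0.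
  rewrite addnS addSn !yR IH.
  by rewrite hmp //; lia.
have hz3 : forall k, (1 <= k)%N -> y k = y (k + p)%N.
  move=> k hk; rewrite -(yP k M hk) -(yP (k + p)%N M); last lia.
  have hMN : (M <= M * N)%N by rewrite leq_pmulr; lia.
  have e1 : (k + M * N = M + (k + M * N - M))%N by lia.
  have e2 : (k + p + M * N = M + (k + M * N - M) + p)%N by lia.
  by rewrite e2 [in LHS]e1 hz2.
have hz4 : forall k, (1 <= k)%N -> y k = y (k + p %% N)%N.
  move=> k hk; have e : (k + p = (k + p %% N) + p %/ N * N)%N.
    by move: (divn_eq p N); lia.
  by rewrite hz3 // e yP //; lia.
have hrho : (p %% N = 0)%N.
  apply/eqP; apply/negPn/negP => hr.
  have hlt : (p %% N < N)%N by rewrite ltn_mod; lia.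
  have := hz4 (N - p %% N)%N; rewrite subnK; last lia.
  move=> /(_ ltac:(lia)) heq.
  have hd := hdist (N - p %% N)%N ltac:(lia); move: hd.
  by rewrite -[iter (N - p %% N)%N _ _]/(y _) -[iter N _ _]/(y N) heq eqxx.
have hdiv : (N %| p)%N by apply/dvdnP; exists (p %/ N)%N; rewrite {1}(divn_eq p N) hrho addn0.
have hNp : (N <= p)%N by apply: dvdn_leq; lia.
split => //.
case: m hmp {hMm hz hz2 hz3 hz4} => [|m] hmp; last lia.
have := hmp 0%N (leqnn 0); rewrite add0n.
have -> : p = (N + (p %/ N).-1 * N)%N.
  move: (divn_eq p N); rewrite hrho addn0 => hpe.
  have : (0 < p %/ N)%N by rewrite divn_gt0; lia.
  case: (p %/ N)%N hpe => // q hpe _ /=; rewrite mulSn in hpe; lia.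
rewrite wP; last lia.
by move=> h; move: hw; rewrite /w in h; rewrite h eqxx.
Qed.

Lemma dyn_one (R : realType) (b L : R) : 1 < b -> 0 < L ->
  (forall j, (1 <= j)%N -> L <= iter j (Tbeta b) 1) ->
  is_dbeta_one b (dbeta b 1).
Proof.
move=> hb hL hy K.
have hB : 0 < b ^+ K.+1 by apply: exprn_gt0; lra.
exists (L / b ^+ K.+1); first by apply: divr_gt0.
move=> e he0 he1.
have heB : e * b ^+ K.+1 < L by rewrite -ltr_pdivlMr.
set y := fun k => iter k (Tbeta b) 1.
have st : forall k, (k <= K)%N ->
    b * (y k - e * b ^+ k) = (y k.+1 - e * b ^+ k.+1) + (dbeta b 1 k)%:~R /\
    0 <= y k.+1 - e * b ^+ k.+1 /\ y k.+1 - e * b ^+ k.+1 < 1.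
  move=> k hk.
  have h1 : y k.+1 = b * y k - (dbeta b 1 k)%:~R by apply: yrec.
  have h2 : L <= y k.+1 by apply: hy.
  have h3 : y k.+1 < 1 by rewrite /y iterS; case: (@Tbeta_itv R b (iter k (Tbeta b) 1)).
  have h4 : b ^+ k.+1 <= b ^+ K.+1 by apply: ler_weXn2l; [lra | lia].
  have h5 : 0 <= e * b ^+ k.+1 by apply: mulr_ge0; [lra | apply: exprn_ge0; lra].
  have h6 : e * b ^+ k.+1 <= e * b ^+ K.+1 by apply: ler_wpM2l; lra.
  split; last by split; lra.
  rewrite h1 exprS; ring.
have it : forall k, (k <= K.+1)%N -> iter k (Tbeta b) (1 - e) = y k - e * b ^+ k.
  elim=> [|k IH] hk; first by rewrite /y /= expr0 mulr1.
  rewrite iterS IH; last lia.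
  have [s1 [s2 s3]] := st k ltac:(lia).
  by rewrite /Tbeta s1 floor_shift //; ring.
move=> k hk; rewrite /dbeta it; last lia.
have [s1 [s2 s3]] := st k hk.
by rewrite -/(y k) s1 floor_shift.
Qed.
Lemma int_small (R : realType) (d : int) : -1 < d%:~R :> R -> d%:~R < 1 :> R -> d = 0.
Proof.
move=> h1 h2.
have : (-1 < d)%R by rewrite -(ltr_int R) mulrNz.
have : (d < 1)%R by rewrite -(ltr_int R).
lia.
Qed.
Lemma sum_delta (R : nzRingType) (a b k : nat) (g : nat -> R) :
  \sum_(a <= i < b) g i * (k == i)%:R = if (a <= k < b)%N then g k else 0.
Proof.
elim: b => [|b IH]; first by rewrite big_geq // ltn0 andbF.
case: (leqP a b) => hab; last first.
  rewrite big_geq //; case: ifP => //; lia.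
rewrite big_nat_recr //= IH.
have [->|kb] := eqVneq k b.
  by rewrite mulr1 hab ltnn andbF ltnSn add0r.
rewrite mulr0 addr0; case: ifP; case: ifP => //; lia.
Qed.

Lemma intrB1 (R : realType) (z : int) : (z - 1)%:~R = z%:~R - 1 :> R.
Proof. by rewrite intrD. Qed.

Theorem lemma1 (R : realType) (u v : R) (n : nat) (beta : R)
  (f : {poly int}) (g : nat -> R) :
  0 < u -> u < v -> v < 1 -> (1 <= n)%N -> 1 < beta ->
  f \is monic -> size f = (2 * n + 3)%N ->
  (map_poly intr f : {poly R}).[beta] = 0 ->
  f.[0] = 1 ->
  Num.max (2 / u) (1 / (1 - v)) < beta ->
  map_poly intr f =
    ('X - beta%:P) * ('X - (beta^-1)%:P) *
    ('X^(2 * n) + 1 + \sum_(1 <= i < 2 * n) g i *: 'X^i) ->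
  (forall i : nat, (1 <= i <= 2 * n - 1)%N -> u < g i /\ g i < v) ->
  (forall x : R, x != 0 ->
     x ^+ (2 * n + 2) * (map_poly intr f : {poly R}).[x^-1]
       = (map_poly intr f : {poly R}).[x])
  /\ exists w : nat -> int, is_dbeta_one beta w /\ mp_periodic w 1 (2 * n + 1).
Proof.
move=> hu huv hv hn hb _ _ _ _ hmax hF hg.
set b := beta in hb hmax hF *.
set F := map_poly intr f in hF *.
set H := ('X^(2 * n) + 1 + _) in hF.
set m := (2 * n)%N.
have hm : (2 <= m)%N by rewrite /m; lia.
have b0 : b != 0 by rewrite gt_eqF //; lra.
set ib := b^-1 in hF *.
have hbib : b * ib = 1 by rewrite /ib mulfV.
have ib0 : 0 < ib by rewrite /ib invr_gt0; lra.
move: hmax; rewrite gt_max => /andP[hm1 hm2].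
have hbu : 2 < b * u by rewrite ltr_pdivrMr in hm1.
have hbv : 1 < b * (1 - v) by rewrite ltr_pdivrMr in hm2; [lra | lra].
have ibu : ib < u / 2 by nra.
have ibv : ib < 1 - v by nra.
set c := fun k => H`_k.
have hc : forall k, c k = (k == m)%:R + (k == 0%N)%:R + (if (1 <= k < m)%N then g k else 0).
  move=> k; rewrite /c /H coefD coefD coefXn coef1 coef_sum -sum_delta.
  by congr (_ + _); apply: eq_bigr => i _; rewrite coefZ coefXn.
have c0 : c 0%N = 1.
  have h0m : (0 == m)%N = false by apply/negbTE/eqP; clear -hm; lia.
  rewrite hc h0m eqxx (_ : (0 < 0 < m)%N = false) //.
  by rewrite (_ : false%:R = 0 :> R) // (_ : true%:R = 1 :> R) // add0r addr0.
have cm : c m = 1.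
  have hm0 : (m == 0)%N = false by apply/negbTE/eqP; clear -hm; lia.
  rewrite hc hm0 eqxx (_ : (0 < m < m)%N = false); last by rewrite ltnn andbF.
  by rewrite (_ : false%:R = 0 :> R) // (_ : true%:R = 1 :> R) // addr0 addr0.
have cg : forall k, (1 <= k <= m - 1)%N -> c k = g k.
  move=> k hk; rewrite hc.
  have -> : (k == m)%N = false by apply/negbTE/eqP; clear -hm hk; lia.
  have -> : (k == 0)%N = false by apply/negbTE/eqP; clear -hm hk; lia.
  have -> : (1 <= k < m)%N = true by clear -hm hk; lia.
  by rewrite (_ : false%:R = 0 :> R) // add0r add0r.
have cbig : forall k, (m < k)%N -> c k = 0.
  move=> k hk; rewrite hc.
  have -> : (k == m)%N = false by apply/negbTE/eqP; clear -hm hk; lia.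
  have -> : (k == 0)%N = false by apply/negbTE/eqP; clear -hm hk; lia.
  have -> : (1 <= k < m)%N = false by clear -hm hk; lia.
  by rewrite (_ : false%:R = 0 :> R) // add0r add0r.
have hQ : ('X - b%:P) * ('X - ib%:P) = 'X * 'X - (b + ib)%:P * 'X + 1 :> {poly R}.
  have e : b%:P * ib%:P = 1 :> {poly R} by rewrite -polyCM hbib.
  rewrite polyCD -e; ring.
set s := b + ib in hQ *.
have hFc : F = 'X * ('X * H) - s%:P * ('X * H) + H by rewrite hF hQ; ring.
have F0 : F`_0 = c 0%N.
  by rewrite hFc coefD coefB coefCM !coefXM eqxx mulr0 subr0 add0r.
have F1 : F`_1 = c 1%N - s * c 0%N.
  rewrite hFc coefD coefB coefCM !coefXM /= sub0r.
  by rewrite addrC.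
have F2 : forall k, F`_k.+2 = c k - s * c k.+1 + c k.+2.
  by move=> k; rewrite hFc coefD coefB coefCM !coefXM /=.
have Fint : forall k, F`_k = (f`_k)%:~R.
  by move=> k; rewrite /F coef_map_id0.
pose r : nat -> R := fun k => if k is j.+1 then c j.+1 - c j * ib else 1.
have rkey : forall k, b * r k = r k.+1 + (- f`_k.+1)%:~R.
  case=> [|j].
    rewrite /r intrN -Fint F1 c0 /s; lra.
  rewrite /r intrN -Fint F2 /s mulrBr (mulrCA b) hbib mulr1; ring.
have cr01 : forall j, (j <= m - 1)%N -> 0 < c j /\ c j <= 1.
  case=> [|j] hj; first by rewrite c0; split; lra.
  have [h1 h2] := hg j.+1 hj; rewrite cg //; split; lra.
have rlo : forall k, (1 <= k <= m)%N -> u - ib < r k /\ r k < 1.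
  case=> [|j] hj; first by [].
  have [hj1|hj1] := ltnP j.+1 m.
    have [h1 h2] := hg j.+1 ltac:(clear -hj1; lia).
    have [h3 h4] := cr01 j ltac:(clear -hj1; lia).
    have h5 : c j * ib <= ib by apply: ler_piMl; lra.
    have h6 : 0 < c j * ib by apply: mulr_gt0.
    rewrite /r cg; last by clear -hj1; lia.
    split; lra.
  have ej : j.+1 = m by clear -hj hj1; lia.
  have [h1 h2] := hg j ltac:(clear -hj hj1 hm; lia).
  have h5 : g j * ib <= ib by apply: ler_piMl; lra.
  have h6 : 0 < g j * ib by apply: mulr_gt0; lra.
  rewrite /r ej cm (cg j); last by clear -hj hj1 hm; lia.
  split; lra.
have rv : forall k, (1 <= k <= m - 1)%N -> r k < v.
  case=> [|j] hj; first by [].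
  have [h1 h2] := hg j.+1 hj.
  have [h3 h4] := cr01 j ltac:(clear -hj; lia).
  have h6 : 0 < c j * ib by apply: mulr_gt0.
  rewrite /r cg //; lra.
have rm : 1 - ib < r m.
  have em : m = m.-1.+1 by clear -hm; lia.
  have [h1 h2] := hg m.-1 ltac:(clear -hm; lia).
  have h5 : g m.-1 * ib < ib by rewrite gtr_pMl //; lra.
  rewrite [in r m]em /r prednK; last by clear -hm; lia.
  rewrite cm cg; [lra | clear -hm; lia].
have rm1 : r m.+1 = - ib by rewrite /r cbig ?cm; [ring | clear; lia].
have hyr : forall k, (k <= m)%N -> iter k (Tbeta b) 1 = r k.
  elim=> [|k IH] hk //.
  rewrite iterS IH; last by clear -hk; lia.
  have [h1 h2] := rlo k.+1 ltac:(clear -hk; lia).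
  rewrite /Tbeta rkey floor_shift ?addrK //; lra.
have ym1 : iter m.+1 (Tbeta b) 1 = 1 - ib.
  rewrite iterS hyr // /Tbeta rkey rm1.
  have e : - ib + (- f`_m.+1)%:~R = (1 - ib) + (- f`_m.+1 - 1)%:~R.
    by rewrite intrB1; ring.
  rewrite e floor_shift; [|lra|lra].
  by rewrite intrB1; ring.
have [r1a r1b] := rlo 1%N ltac:(clear -hm; lia).
have eb : b * (1 - ib) = r 1%N + (- f`_1 - 1)%:~R.
  rewrite intrB1 mulrBr mulr1 hbib.
  have := rkey 0%N; rewrite /= mulr1 => ->; rewrite /r; ring.
have hper : iter m.+2 (Tbeta b) 1 = iter 1 (Tbeta b) 1.
  rewrite iterS ym1 hyr; last by clear -hm; lia.
  rewrite /Tbeta eb floor_shift; [|lra|lra].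
  by rewrite addrK.
split; last first.
  exists (dbeta b 1); rewrite addn1; split.
    apply: (@dyn_one R b (u - ib)) => //; first lra.
    move=> j hj.
    have [i hi ->] := @yred R b m.+1 ltac:(by []) hper j hj.
    have [him|him] := leqP i m.
      rewrite hyr //; have [h1 h2] := rlo i ltac:(clear -hi him; lia); lra.
    have -> : i = m.+1 by clear -hi him; lia.
    rewrite ym1; lra.
  apply: dyn_mp => //; first by clear -hm; lia.
    move=> j hj; rewrite ym1 hyr; last by clear -hj; lia.
    apply/eqP => E.
    have [hjm|hjm] := ltnP j m.
      have := rv j ltac:(clear -hj hjm; lia); lra.
    have ej : j = m by clear -hj hjm; lia.
    move: E; rewrite ej; lra.
  rewrite /dbeta ym1 /= eb floor_shift; [|lra|lra].
  rewrite mulr1 (_ : b = b * r 0%N); last by rewrite /r mulr1.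
  rewrite rkey floor_shift; [|lra|lra].
  apply/eqP => E; clear -E; lia.
have sym : forall k, (k <= m)%N -> c k = c (m - k)%N.
  move=> k; elim/ltn_ind: k => k IH hk.
  have [k0|k0] := eqVneq k 0%N; first by rewrite k0 subn0 c0 cm.
  have [km|km] := eqVneq k m; first by rewrite km subnn cm c0.
  have [h1 h2] := hg k ltac:(clear -hk k0 km; lia).
  have [h3 h4] := hg (m - k)%N ltac:(clear -hk k0 km; lia).
  have Ed : (f`_k - f`_(m.+2 - k)%N)%:~R = c k - c (m - k)%N.
    rewrite intrB -!Fint.
    move: IH hk k0 km h1 h2 h3 h4; case: k => [|[|j]] IH hk k0 km h1 h2 h3 h4.
    - by rewrite eqxx in k0.
    - have e : (m.+2 - 1 = (m - 1).+2)%N by clear -hm; lia.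
      have e2 : ((m - 1).+1 = m)%N by clear -hm; lia.
      rewrite e F1 F2 e2 cm c0 (cbig m.+1) //.
      lra.
    - have e : (m.+2 - j.+2 = (m - j.+2).+2)%N by clear -hk km; lia.
      have e2 : ((m - j.+2).+1 = m - j.+1)%N by clear -hk km; lia.
      have e3 : ((m - j.+2).+2 = m - j)%N by clear -hk km; lia.
      rewrite e !F2 e3 e2 (IH j) ?(IH j.+1); try (clear -hk; lia).
      lra.
  rewrite cg ?(cg (m - k)%N) in Ed *; try (clear -hk k0 km; lia).
  have d0 := @int_small R (f`_k - f`_(m.+2 - k)%N) ltac:(rewrite Ed; lra) ltac:(rewrite Ed; lra).
  move: Ed; rewrite d0 mulr0z; lra.
have hH : forall y, H.[y] = y ^+ m + 1 + \sum_(1 <= i < m) g i * y ^+ i.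
  move=> y; rewrite /H hornerD hornerD hornerXn hornerC horner_sum.
  by congr (_ + _); apply: eq_bigr => i _; rewrite hornerZ hornerXn.
move=> x x0.
have hq : x ^+ 2 * ((x^-1 - b) * (x^-1 - ib)) = (x - b) * (x - ib).
  by rewrite /ib; field; apply/andP; split.
have hh : x ^+ m * H.[x^-1] = H.[x].
  rewrite !hH !mulrDr exprVn mulfV ?expf_neq0 // mulr1 mulr_sumr.
  have hs : \sum_(1 <= i < m) x ^+ m * (g i * x^-1 ^+ i) = \sum_(1 <= i < m) g i * x ^+ i.
    rewrite [in RHS]big_nat_rev; apply: eq_big_nat => i hi.
    have -> : (1 + m - i.+1 = m - i)%N by clear; lia.
    have gi : g i = g (m - i)%N.
      rewrite -(cg i); last by clear -hi hm; lia.
      rewrite (sym i); last by clear -hi; lia.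
      rewrite cg //; clear -hi hm; lia.
    rewrite expfB; last by clear -hi; lia.
    by rewrite exprVn mulrCA gi.
  rewrite hs; ring.
rewrite hF !hornerM !hornerXsubC exprD.
rewrite -hq -hh; ring.
Qed.
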